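(* Let $L$ be a finite lattice. If the only tolerances on $L$ are $\mathrm{id}_L$ and $L^2$, then $\mathsf{C}(L)=\mathsf{Pol}_{0,1}(L)$.
   Context: $L$ has bounds $0,1$; $\mathrm{id}_L=\{(x,x):x\in L\}$. An $n$-ary aggregation function on $L$ ($n\ge1$) is a nondecreasing map $A:L^n\to L$ with $A(0,\dots,0)=0$ and $A(1,\dots,1)=1$; $\mathsf{C}(L)$ is the set of all of them. Polynomials on $L$ are functions $L^n\to L$ built from projections and constants by finitely many pointwise joins and meets; $\mathsf{Pol}_{0,1}(L)$ is the set of polynomials preserving $0$ and $1$. A tolerance on $L$ is a reflexive, symmetric binary relation $T$ such that $(a,b),(c,d)\in T$ imply $(a\vee c,b\vee d),(a\wedge c,b\wedge d)\in T$. *)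

(* Defs.v *)
From HB Require Import structures.
From mathcomp Require Import all_boot all_order.
Set Implicit Arguments. Unset Strict Implicit. Unset Printing Implicit Defensive.
Import Order.TTheory.
Local Open Scope order_scope.

(* A finite lattice L is taken as a nonempty finite lattice (finTBLatticeType),
   whose bottom/top are the bounds 0 = \bot and 1 = \top.
   n-ary functions are maps ('I_n -> L) -> L. *)

Definition aggregation {d} {L : finTBLatticeType d} (n : nat)
  (A : ('I_n -> L) -> L) : Prop :=
  [/\ (forall x y : 'I_n -> L, (forall i, x i <= y i) -> A x <= A y),
      A (fun _ => \bot) = \bot &
      A (fun _ => \top) = \top].

Inductive lpterm (T : Type) (n : nat) : Type :=
  | LPvar of 'I_n
  | LPconst of T
  | LPjoin of lpterm T n & lpterm T n
  | LPmeet of lpterm T n & lpterm T n.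

Fixpoint lpeval {d} {L : finTBLatticeType d} {n : nat} (t : lpterm L n)
  (x : 'I_n -> L) : L :=
  match t with
  | LPvar i => x i
  | LPconst c => c
  | LPjoin t1 t2 => lpeval t1 x `|` lpeval t2 x
  | LPmeet t1 t2 => lpeval t1 x `&` lpeval t2 x
  end.

Definition polynomial {d} {L : finTBLatticeType d} (n : nat)
  (f : ('I_n -> L) -> L) : Prop :=
  exists t : lpterm L n, forall x, f x = lpeval t x.

Definition polynomial01 {d} {L : finTBLatticeType d} (n : nat)
  (f : ('I_n -> L) -> L) : Prop :=
  [/\ polynomial f, f (fun _ => \bot) = \bot & f (fun _ => \top) = \top].

Definition tolerance {d} {L : finTBLatticeType d} (T : L -> L -> Prop) : Prop :=
  [/\ (forall x, T x x),
      (forall x y, T x y -> T y x) &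
      (forall a b c e, T a b -> T c e -> T (a `|` c) (b `|` e) /\ T (a `&` c) (b `&` e))].

(* Main.v *)
Require Import Defs.
From mathcomp Require Import all_boot all_order.
Set Implicit Arguments. Unset Strict Implicit. Unset Printing Implicit Defensive.
Import Order.TTheory.

Section Aux.
Local Open Scope order_scope.
Context {d : Order.disp_t} {L : finTBLatticeType d}.

Inductive PC (X : Type) (G : (X -> L) -> Prop) : (X -> L) -> Prop :=
| PCgen g : G g -> PC G g
| PCconst (c : L) : PC G (fun _ => c)
| PCjoin f g : PC G f -> PC G g -> PC G (fun x => f x `|` g x)
| PCmeet f g : PC G f -> PC G g -> PC G (fun x => f x `&` g x)
| PCext f g : PC G f -> (forall x, f x = g x) -> PC G g.

Definition Gu (g : L -> L) := forall y, g y = y.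
Definition PCu := PC Gu.

Lemma PCu_mono p : PCu p -> forall x y, x <= y -> p x <= p y.
Proof.
elim=> {p} [g Hg|c|f g _ Hf _ Hg|f g _ Hf _ Hg|f g _ Hf E] x y xy.
- by rewrite !Hg.
- by [].
- by apply: leU2; [apply: Hf|apply: Hg].
- by apply: leI2; [apply: Hf|apply: Hg].
- by rewrite -!E; apply: Hf.
Qed.

Lemma PCu_comp X G (h : X -> L) p : PCu p -> PC G h -> PC G (fun x => p (h x)).
Proof.
move=> Hp Hh; elim: Hp => {p} [g Hg|c|f g _ Hf _ Hg|f g _ Hf _ Hg|f g _ Hf E].
- by apply: PCext Hh _ => x; rewrite Hg.
- exact: PCconst.
- exact: PCjoin.
- exact: PCmeet.
- by apply: PCext Hf _ => x; rewrite E.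
Qed.

Definition Gn n (g : ('I_n -> L) -> L) := exists i, forall x, g x = x i.

Lemma PC_poly n (f : ('I_n -> L) -> L) : PC (@Gn n) f -> polynomial f.
Proof.
elim=> {f} [g [i Hi]|c|f g _ [t1 H1] _ [t2 H2]|f g _ [t1 H1] _ [t2 H2]|f g _ [t Ht] E].
- by exists (LPvar L i) => x; rewrite Hi.
- by exists (LPconst n c).
- by exists (LPjoin t1 t2) => x /=; rewrite H1 H2.
- by exists (LPmeet t1 t2) => x /=; rewrite H1 H2.
- by exists t => x; rewrite -E.
Qed.

Lemma lpeval_mono n (t : lpterm L n) x y :
  (forall i, x i <= y i) -> lpeval t x <= lpeval t y.
Proof.
move=> H; elim: t => [i|c|t1 H1 t2 H2|t1 H1 t2 H2] //=.
- exact: leU2.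
- exact: leI2.
Qed.

Hypothesis Htol : forall T : L -> L -> Prop, tolerance T ->
     (forall x y, T x y <-> x = y) \/ (forall x y, T x y).

Lemma sep u b : u < b -> exists p, PCu p /\ p u = \bot /\ p b = \top.
Proof.
move=> ub.
pose T x y := exists p, PCu p /\ p u <= x `&` y /\ x `|` y <= p b.
have tolT : tolerance T.
  split.
  - move=> x; exists (fun _ => x); split; first exact: PCconst.
    by rewrite meetxx joinxx.
  - by move=> x y [p [Hp [H1 H2]]]; exists p; rewrite meetC joinC.
  - move=> a b' c e [p [Hp [H1 H2]]] [q [Hq [H3 H4]]]; split.
    + exists (fun x => p x `|` q x); split; first exact: PCjoin.
      split.
      * rewrite lexI; apply/andP; split; apply: leU2.
        - exact: le_trans H1 (leIl _ _).
        - exact: le_trans H3 (leIl _ _).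
        - exact: le_trans H1 (leIr _ _).
        - exact: le_trans H3 (leIr _ _).
      * rewrite leUx; apply/andP; split; apply: leU2.
        - exact: le_trans (leUl _ _) H2.
        - exact: le_trans (leUl _ _) H4.
        - exact: le_trans (leUr _ _) H2.
        - exact: le_trans (leUr _ _) H4.
    + exists (fun x => p x `&` q x); split; first exact: PCmeet.
      split.
      * rewrite lexI; apply/andP; split; apply: leI2.
        - exact: le_trans H1 (leIl _ _).
        - exact: le_trans H3 (leIl _ _).
        - exact: le_trans H1 (leIr _ _).
        - exact: le_trans H3 (leIr _ _).
      * rewrite leUx; apply/andP; split; apply: leI2.
        - exact: le_trans (leUl _ _) H2.
        - exact: le_trans (leUl _ _) H4.
        - exact: le_trans (leUr _ _) H2.
        - exact: le_trans (leUr _ _) H4.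
have Tub : T u b.
  exists id; split; first by apply: PCgen.
  have ub' : u <= b by move: ub; rewrite lt_def => /andP[].
  by rewrite /= (meet_l ub') (join_r ub').
case: (Htol tolT) => [Hid|Hall].
  by move/Hid: Tub => E; move: ub; rewrite E lt_def eqxx.
have [p [Hp [H1 H2]]] := Hall \bot \top.
exists p; split=> //; split.
  by apply/eqP; rewrite -lex0; apply: le_trans H1 _; rewrite meet0x.
by apply/eqP; rewrite eq_le lex1 /=; apply: le_trans H2; rewrite joinx1.
Qed.

Lemma chi_ex b : exists q, PCu q /\ (forall y, b <= y -> q y = \top) /\
   (forall x, ~~ (b <= x) -> q x = \bot).
Proof.
suff H : forall s : seq L, exists q, PCu q /\ (forall y, b <= y -> q y = \top) /\
   (forall x, x \in s -> ~~ (b <= x) -> q x = \bot).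
  have [q [Hq [H1 H2]]] := H (enum L).
  by exists q; do 2 split => //; move=> x; apply: H2; rewrite mem_enum.
elim=> [|x s [q [Hq [H1 H2]]]].
  by exists (fun _ => \top); split; [exact: PCconst|split].
case bx: (b <= x).
  exists q; do 2 split=> //; move=> y; rewrite in_cons => /orP[/eqP->|ys].
    by rewrite bx.
  exact: H2.
have ub : x `&` b < b.
  rewrite lt_def leIr andbT; apply/negP => /eqP E.
  by move: bx; rewrite {1}E leIl.
have [p [Hp [Hp0 Hp1]]] := sep ub.
have Hpb : PCu (fun y => p (y `&` b)).
  apply: PCu_comp Hp _; apply: PCmeet; [by apply: PCgen|exact: PCconst].
exists (fun y => q y `&` p (y `&` b)); split; first exact: PCmeet.
split.
  move=> y by'; rewrite H1 // meet1x; apply/eqP; rewrite eq_le lex1 /= -{1}Hp1.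
  by apply: PCu_mono Hp _ _ _; rewrite lexI by' lexx.
move=> y; rewrite in_cons => /orP[/eqP->|ys] nby.
  by rewrite Hp0 meetx0.
by rewrite H2 // meet0x.
Qed.

End Aux.
Local Open Scope order_scope.

Theorem mainTheorem4 (d : Order.disp_t) (L : finTBLatticeType d) :
  (forall T : L -> L -> Prop, tolerance T ->
     (forall x y, T x y <-> x = y) \/ (forall x y, T x y)) ->
  forall (n : nat), (0 < n)%N ->
    forall A : ('I_n -> L) -> L, aggregation A <-> polynomial01 A.
Proof.
move=> Htol n _ A; split; last first.
  case=> [[t Ht] A0 A1]; split=> // x y H; rewrite !Ht; exact: lpeval_mono.
case=> mono A0 A1.
have chi (b : L) : exists q, @PCu _ L q /\ forall y, q y = if (b <= y)%O then \top else \bot.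
  have [q [Hq [H1 H2]]] := chi_ex Htol b.
  exists q; split=> // y; case: ifP => by'; [exact: H1|by apply: H2; rewrite by'].
have Cn (a : 'I_n -> L) : exists c, PC (@Gn _ L n) c /\
    forall x, c x = if all (fun i => (a i <= x i)%O) (enum 'I_n) then \top else \bot.
  elim: (enum 'I_n) => [|i s [c [Hc Ec]]].
    by exists (fun _ => \top); split; [exact: PCconst|].
  have [q [Hq Eq]] := chi (a i).
  exists (fun x => c x `&` q (x i))%O; split.
    apply: PCmeet => //; apply: PCu_comp Hq _; apply: PCgen; by exists i.
  move=> x /=; rewrite Ec Eq.
  case: (a i <= x i)%O; case: all => /=;
    by rewrite ?meetx1 ?meetx0 ?meet0x ?meet1x.
have main : forall s : seq {ffun 'I_n -> L}, exists g, PC (@Gn _ L n) g /\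
   (forall x, (g x <= A x)%O) /\ (forall x, finfun x \in s -> (A x <= g x)%O).
  elim=> [|a s [g [Hg [H1 H2]]]].
    by exists (fun _ => \bot); split; [exact: PCconst|split=> // x; rewrite le0x].
  have [c [Hc Ec]] := Cn a.
  exists (fun x => g x `|` (A a `&` c x))%O; split.
    by apply: PCjoin => //; apply: PCmeet => //; apply: PCconst.
  split.
    move=> x; rewrite leUx H1 /= Ec; case: ifP => [/allP Hall|_].
      by rewrite meetx1; apply: mono => i; apply: Hall; rewrite mem_enum.
    by rewrite meetx0 le0x.
  move=> x; rewrite in_cons => /orP[/eqP Ea|xs]; last first.
    exact: le_trans (H2 _ xs) (leUl _ _).
  apply: le_trans (leUr _ _); rewrite Ec.
  have -> : all (fun i => (a i <= x i)%O) (enum 'I_n).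
    by apply/allP => i _; rewrite -Ea ffunE.
  by rewrite meetx1; apply: mono => i; rewrite -Ea ffunE.
have [g [Hg [H1 H2]]] := main (enum {ffun 'I_n -> L}).
split=> //; apply: PC_poly; apply: PCext Hg _ => x.
by apply: le_anti; rewrite H1 H2 // mem_enum.
Qed.
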